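(* Let $a,b$ be nonnegative integers and let $G$ be a finite group. If for every minimal normal subgroup $M$ of $G$ the quotient $G/M$ is sub-$(a,b)$-valent, then for every nontrivial normal subgroup $N$ of $G$ the quotient $G/N$ is sub-$(a,b)$-valent.
   Context: An involution is an element of order $2$. A subset $S$ of a group $G$ is a Cayley set of $G$ if $1\notin S$, $S$ is inverse-closed, and $S$ generates $G$. On pairs of nonnegative integers define $(a',b')\preccurlyeq(a,b)$ if and only if $b'\le b$ and $a'\le a+(b-b')/2$. A Cayley set is sub-$(a,b)$-valent if it consists of $a'$ involutions and $b'$ non-involutions with $(a',b')\preccurlyeq(a,b)$. A group is sub-$(a,b)$-valent if it has a sub-$(a,b)$-valent Cayley set. *)

(* Defs.v *)
From mathcomp Require Import all_boot all_fingroup.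
From mathcomp Require Import gseries.
Set Implicit Arguments. Unset Strict Implicit. Unset Printing Implicit Defensive.
Local Open Scope group_scope.

Definition cayley_set (gT : finGroupType) (H S : {set gT}) : Prop :=
  [/\ 1 \notin S, S^-1 = S & <<S>> = H].

Definition n_invol (gT : finGroupType) (S : {set gT}) : nat :=
  #|[set x in S | #[x] == 2]|.
Definition n_noninvol (gT : finGroupType) (S : {set gT}) : nat :=
  #|[set x in S | #[x] != 2]|.

(* (a',b') ≼ (a,b)  iff  b' <= b  and  a' <= a + (b-b')/2 (rational division),
   written without division as 2a' <= 2a + (b - b'). *)
Definition preceq (a' b' a b : nat) : Prop :=
  (b' <= b)%N /\ (2 * a' <= 2 * a + (b - b'))%N.

Definition sub_valent_set (gT : finGroupType) (a b : nat) (H S : {set gT}) : Prop :=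
  cayley_set H S /\ preceq (n_invol S) (n_noninvol S) a b.

Definition sub_valent (gT : finGroupType) (a b : nat) (H : {set gT}) : Prop :=
  exists S : {set gT}, sub_valent_set a b H S.

(* Main.v *)
Require Import Defs.
From mathcomp Require Import all_boot all_fingroup all_solvable zify.
From mathcomp Require Import gseries.
Set Implicit Arguments. Unset Strict Implicit. Unset Printing Implicit Defensive.
Local Open Scope group_scope.

Definition wt (gT : finGroupType) (x : gT) : nat := if #[x] == 2%N then 2%N else 1%N.

Lemma sum_wt (gT : finGroupType) (A : {set gT}) :
  (\sum_(x in A) wt x = 2 * n_invol A + n_noninvol A)%N.
Proof.
rewrite (bigID (fun x => #[x] == 2%N)) /=.
rewrite (eq_bigr (fun _ => 2%N)); last by rewrite /wt => x /andP[_ ->].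
rewrite [X in (_ + X)%N](eq_bigr (fun _ => 1%N)); last by rewrite /wt => x /andP[_ /negbTE ->].
rewrite !sum_nat_const /n_invol /n_noninvol mulnC muln1.
by congr (2 * _ + _)%N; apply: eq_card => x; rewrite !inE.
Qed.

Lemma ord2_inv (gT : finGroupType) (y : gT) : #[y] = 2%N -> y^-1 = y.
Proof. by move=> h; rewrite invg_expg h expg1. Qed.

Lemma inv_ord2 (gT : finGroupType) (x : gT) : x != 1 -> x^-1 = x -> #[x] = 2%N.
Proof.
move=> nx1 xi.
have h2 : #[x] %| 2. by rewrite order_dvdn expgS expg1 -{1}xi mulVg.
have h1 : #[x] != 1%N by rewrite order_eq1.
have hp := order_gt0 x.
have := dvdn_leq (isT : (0 < 2)%N) h2. lia.
Qed.

Section Count.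
Variables (aT rT : finGroupType) (D : {group aT}) (phi : {morphism D >-> rT}).
Variables (S : {set aT}).
Hypotheses (sSD : S \subset D) (S1 : 1 \notin S) (SV : S^-1 = S).

Lemma fiber_wt y : y \in (phi @: S) :\ 1 ->
  (wt y <= \sum_(x in S | phi x == y) wt x)%N.
Proof.
case/setD1P=> ny1 /imsetP[x0 Sx0 ->].
have Dx0 : x0 \in D := subsetP sSD x0 Sx0.
rewrite (bigD1 x0) /=; last by rewrite Sx0 eqxx.
rewrite {1}/wt; case: ifP => o2; last by rewrite {1}/wt; case: (_ == _).
rewrite /wt; case: ifP => [_|ox]; first by rewrite leq_addr.
have Sx0i : x0^-1 \in S by rewrite -SV inE invgK.
have nx : x0^-1 != x0.
  apply/eqP => e; move/negbT: ox; rewrite inv_ord2 //.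
  by apply: contraNneq S1 => <-.
rewrite (bigD1 x0^-1) /=; last first.
  by rewrite Sx0i nx morphV // ord2_inv ?eqxx //; apply/eqP.
rewrite addnA; apply: leq_trans (leq_addr _ _).
by rewrite /wt; case: ifP.
Qed.

Lemma wt_le : (\sum_(y in (phi @: S) :\ 1%g) wt y <= \sum_(x in S) wt x)%N.
Proof.
rewrite (partition_big_imset phi) /= [X in (_ <= X)%N](bigID (fun j => j != 1)) /=.
apply: leq_trans (leq_addr _ _).
rewrite [X in (_ <= X)%N](eq_bigl (fun j => j \in (phi @: S) :\ 1%g)); last by move=> j; rewrite !inE andbC.
by apply: leq_sum => j /fiber_wt.
Qed.

Lemma noninv_le : (n_noninvol ((phi @: S) :\ 1%g) <= n_noninvol S)%N.
Proof.
rewrite /n_noninvol; apply: leq_trans (leq_imset_card phi _).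
apply: subset_leq_card; apply/subsetP => y; rewrite !inE.
case/andP => /andP[ny1 /imsetP[x Sx eyx]] oy; subst y.
apply/imsetP; exists x => //; rewrite inE Sx /=.
apply: contra oy => /eqP ox.
have := morph_order phi (subsetP sSD x Sx); rewrite ox.
have := order_gt0 (phi x); rewrite -order_eq1 in ny1.
move: ny1 => /eqP ny1 hp /(dvdn_leq (isT : (0 < 2)%N)) h. apply/eqP; lia.
Qed.
End Count.

Lemma inv_img (aT rT : finGroupType) (D : {group aT}) (phi : {morphism D >-> rT})
  (S : {set aT}) : S \subset D -> S^-1 = S -> ((phi @: S) :\ 1)^-1 = (phi @: S) :\ 1.
Proof.
move=> sSD SV.
have H y : y \in (phi @: S) :\ 1 -> y^-1 \in (phi @: S) :\ 1.
  case/setD1P => ny1 /imsetP[x Sx eyx]; subst y; apply/setD1P; split.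
    by rewrite eq_invg1.
  apply/imsetP; exists x^-1; first by rewrite -SV inE invgK.
  by rewrite morphV // (subsetP sSD).
apply/setP => y; rewrite inE; apply/idP/idP => [/H|/H]; by rewrite ?invgK.
Qed.

Unset Implicit Arguments.
Set Strict Implicit.

Theorem lemma3p1 (a b : nat) (gT : finGroupType) (G : {group gT}) :
  (forall M : {group gT}, minnormal M G -> sub_valent a b (G / M)%g) ->
  forall N : {group gT}, N <| G -> N :!=: 1%g -> sub_valent a b (G / N)%g.
Proof.
move=> hyp N nNG ntN.
have [M minM sMN] := minnormal_exists ntN (normal_norm nNG).
have [S [[S1 SV genS] [hb ha]]] := hyp M minM.
have /andP[_ nMG] := mingroupp minM.
pose f := restrm (normal_norm nNG) (coset N).
pose q := coset M.
have sK : 'ker q \subset 'ker f.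
  rewrite ker_restrm !ker_coset subsetI sMN andbT.
  exact: subset_trans sMN (normal_sub nNG).
pose phi := factm sK nMG.
have sSD : S \subset q @* G by rewrite -[q @* G]genS subset_gen.
exists ((phi @: S) :\ 1); split; first split.
- by rewrite !inE eqxx.
- exact: inv_img.
- rewrite genD1id -morphimEsub // -morphim_gen // genS morphim_factm.
  by rewrite morphim_restrm setIid.
- have h1 : (n_noninvol ((phi @: S) :\ 1%g) <= n_noninvol S)%N := noninv_le phi sSD S1.
  have h2 : (\sum_(y in (phi @: S) :\ 1%g) wt y <= \sum_(x in S) wt x)%N := wt_le phi sSD S1 SV.
  rewrite !sum_wt in h2.
  move: hb ha h2 h1; rewrite /preceq.
  set u := n_noninvol S. set v := n_invol S.
  set w := n_noninvol (_ :\ _). set z := n_invol (_ :\ _).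
  move=> *; split; lia.
Qed.
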